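(* Let $l\ge 4$ be an integer, let $G_1$ be any graph (possibly a loopless multigraph), and let $G=K_1\vee (P_l\cup G_1)$. Then: (i) if $l\ge 5$, then for every $s$ with $3\le s\le l-2$, $$\sigma_1(G)<\sigma_1\big(K_1\vee(C_s\cup P_{l-s}\cup G_1)\big);$$ (ii) if $l=4$, then $\sigma_1(G)<\sigma_1\big(K_1\vee(C_2\cup P_2\cup G_1)\big)$, where $C_2$ is the digon.
   Context: $P_l$ is the path and $C_s$ the cycle on $l$ resp. $s$ vertices; $C_2$ is the digon (two vertices joined by two parallel edges). For loopless multigraphs the degree of a vertex is the number of incident edges and the $(u,v)$ entry of the adjacency matrix $A$ is the number of edges between $u$ and $v$. $Q=A+D$, $D$ the diagonal degree matrix, and $\sigma_1$ denotes the largest eigenvalue of $Q$. $K_1\vee H$ adds one vertex adjacent to every vertex of $H$; $\cup$ is disjoint union. *)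

(* Defs.v *)
(* Loopless multigraphs are given by their adjacency matrices
   'M[nat]_k (entry (u,v) = number of edges between u and v). *)
From HB Require Import structures.
From mathcomp Require Import all_boot all_order all_algebra.
Set Implicit Arguments. Unset Strict Implicit. Unset Printing Implicit Defensive.
Import Order.TTheory GRing.Theory Num.Theory.

Definition loopless_multigraph (k : nat) (A : 'M[nat]_k) : Prop :=
  (forall i j, A i j = A j i) /\ (forall i, A i i = 0%N).

Definition dunion (m p : nat) (A : 'M[nat]_m) (B : 'M[nat]_p) : 'M[nat]_(m + p) :=
  block_mx A (const_mx 0%N) (const_mx 0%N) B.

Definition join1 (m : nat) (A : 'M[nat]_m) : 'M[nat]_(1 + m) :=
  block_mx (const_mx 0%N) (const_mx 1%N) (const_mx 1%N) A.

Definition path_adj (l : nat) : 'M[nat]_l :=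
  \matrix_(i, j) (((i.+1 == j) || (j.+1 == i)) : nat).

(* the cycle C_s on vertices 0,...,s-1 (i ~ i+1 mod s); for s = 2 this
   gives the digon (entry 2 between the two vertices) *)
Definition cycle_adj (s : nat) : 'M[nat]_s :=
  \matrix_(i, j) ((j == (i.+1 %% s) :> nat) + (i == (j.+1 %% s) :> nat))%N.

Local Open Scope ring_scope.

Definition signless_laplacian (R : numDomainType) (k : nat) (A : 'M[nat]_k)
  : 'M[R]_k :=
  \matrix_(i, j) ((A i j)%:R + (i == j)%:R * (\sum_(v < k) (A i v))%:R).

Definition largest_eigenvalue (R : numFieldType) (k : nat) (M : 'M[R]_k) (x : R)
  : Prop :=
  eigenvalue M x /\ (forall y, eigenvalue M y -> y <= x).

(* Main.v *)
Require Import Defs.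
From HB Require Import structures.
From mathcomp Require Import all_boot all_order all_algebra.
From mathcomp Require Import complex ring lra zify.
Set Implicit Arguments. Unset Strict Implicit. Unset Printing Implicit Defensive.
Import Order.TTheory GRing.Theory Num.Theory.
Local Open Scope ring_scope.

Section Spec.
Variable R : rcfType.
Local Notation C := (R[i]).
Local Notation rc := (real_complex R).

Lemma top_eig k (M : 'M[R]_k.+1) : (forall i j, M i j = M j i) ->
  exists x, eigenvalue M x /\
   forall f : 'I_k.+1 -> R, \sum_i \sum_j f i * M i j * f j <= x * \sum_i f i ^+ 2.
Proof.
move=> Msym.
pose Mc : 'M[C]_k.+1 := map_mx rc M.
have Mh : Mc \is hermsymmx.
  apply/is_hermitianmxP; rewrite expr0 scale1r.
  apply/matrixP=> i j; rewrite !mxE /= Msym; apply/eqP.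
  by rewrite eq_complex /= oppr0 !eqxx.
have /orthomx_spectralP Mdec := hermitian_normalmx Mh.
set P := spectralmx Mc in Mdec; set d := spectral_diag Mc in Mdec.
have Pu : P \is unitarymx := spectral_unitarymx Mc.
have PU : P \in unitmx := unitarymx_unit Pu.
have dreal := hermitian_spectral_diag_real Mh.
have dR i : d 0 i = (complex.Re (d 0 i))%:C%C.
  rewrite complexRe; apply/esym/Creal_ReP; exact: (mxOverP dreal).
pose i0 := ([arg max_(i > (ord0 : 'I_k.+1)) complex.Re (d 0 i)])%O.
have i0max : forall i, complex.Re (d 0 i) <= complex.Re (d 0 i0).
  by rewrite /i0; case: arg_maxP => //= j _ H i; exact: H.
exists (complex.Re (d 0 i0)); split.
  rewrite eigenvalue_root_char -(fmorph_root rc) map_char_poly -eigenvalue_root_char.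
  rewrite -/Mc.
  rewrite [X in eigenvalue _ X](_ : _ = d 0 i0); last exact: esym (dR i0).
  apply/eigenvalueP; exists (row i0 P).
    by rewrite Mdec !mulmxA -row_mul mulmxV // row1 -rowE row_diag_mx -scalemxAl -rowE.
  apply/eqP => r0.
  have : row i0 (P *m invmx P) = 0 by rewrite row_mul r0 mul0mx.
  rewrite mulmxV // row1 => /rowP /(_ i0); rewrite !mxE eqxx /=.
  by rewrite eqxx => /eqP; rewrite oner_eq0.
move=> f; set x := complex.Re (d 0 i0).
pose fc i := rc (f i).
have fcJ i : (fc i)^* = fc i by rewrite /fc /=; apply/eqP; rewrite eq_complex /= oppr0 !eqxx.
have key i j : Mc i j = \sum_kk (P kk i)^* * d 0 kk * P kk j.
  rewrite Mdec invmx_unitary // mul_mx_diag !mxE; apply: eq_bigr => kk _; rewrite !mxE //.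
pose w kk := \sum_j P kk j * fc j.
have wJ kk : (w kk)^* = \sum_i (P kk i)^* * fc i.
  rewrite /w rmorph_sum; apply: eq_bigr => i _; rewrite rmorphM; congr (_ * _); exact: fcJ.
have PP i j : \sum_kk (P kk i)^* * P kk j = (i == j)%:R.
  have := mulVmx PU; rewrite invmx_unitary // => /matrixP /(_ i j).
  rewrite !mxE => <-; apply: eq_bigr => kk _; rewrite !mxE //.
have L : rc (\sum_i \sum_j f i * M i j * f j) = \sum_kk d 0 kk * ((w kk)^* * w kk).
  rewrite rmorph_sum.
  transitivity (\sum_i \sum_j fc i * Mc i j * fc j).
    apply: eq_bigr => i _; rewrite rmorph_sum; apply: eq_bigr => j _.
    by rewrite !rmorphM /fc /Mc mxE.
  under eq_bigr do under eq_bigr do rewrite key mulr_sumr mulr_suml.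
  under eq_bigr do rewrite exchange_big.
  rewrite exchange_big; apply: eq_bigr => kk _.
  rewrite (wJ kk) mulr_suml mulr_sumr; apply: eq_bigr => i _.
  rewrite /w big_distrr big_distrr /=; apply: eq_bigr => j _; ring.
have Rr : rc (x * \sum_i f i ^+ 2) = x%:C%C * \sum_kk ((w kk)^* * w kk).
  rewrite rmorphM rmorph_sum; congr (_ * _).
  symmetry.
  transitivity (\sum_kk \sum_i \sum_j (P kk i)^* * P kk j * (fc i * fc j)).
    apply: eq_bigr => kk _; rewrite (wJ kk) /w big_distrl /=; apply: eq_bigr => i _.
    rewrite big_distrr /=; apply: eq_bigr => j _; ring.
  rewrite exchange_big; apply: eq_bigr => i _; rewrite exchange_big /=.
  under eq_bigr do rewrite -big_distrl /= PP.
  rewrite (bigD1 i) //= big1 => [|j ne]; last by rewrite eq_sym (negbTE ne) mul0r.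
  by rewrite eqxx mul1r addr0 rmorphXn.
rewrite -lecR L Rr mulr_sumr; apply: ler_sum => kk _; apply: ler_wpM2r.
  by rewrite mulrC mul_conjC_ge0.
by rewrite dR lecR i0max.
Qed.

End Spec.

Section G.
Variable R : rcfType.
Definition qf k (M : 'M[R]_k) (f : 'I_k -> R) := \sum_i \sum_j f i * M i j * f j.
Definition nrm k (f : 'I_k -> R) := \sum_i f i ^+ 2.
Definition rowQ k (M : 'M[R]_k) (f : 'I_k -> R) j := \sum_i f i * M i j.
Definition degn k (G : 'M[nat]_k) i : nat := \sum_(v < k) (G i v).
Definition rowI k (G : 'M[nat]_k) (f : 'I_k -> R) j :=
  \sum_i f i * (G i j)%:R + (1 + degn G j)%:R * f j.

Lemma qf_row k (M : 'M[R]_k) f : qf M f = \sum_j rowQ M f j * f j.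
Proof.
rewrite /qf exchange_big; apply: eq_bigr => j _; rewrite /rowQ mulr_suml //.
Qed.


Lemma sum_delta k (F : 'I_k -> R) j : \sum_i F i * (i == j)%:R = F j.
Proof.
rewrite (bigD1 j) //= eqxx mulr1 big1 ?addr0 // => i ne.
by rewrite (negbTE ne) mulr0.
Qed.

Lemma eig_fun k (M : 'M[R]_k) x : eigenvalue M x ->
  exists f : 'I_k -> R, (forall j, rowQ M f j = x * f j) /\ exists j, f j != 0.
Proof.
move=> /eigenvalueP [v vM vn0]; exists (fun j => v 0 j); split.
  move=> j; have /matrixP /(_ 0 j) := vM; rewrite !mxE => <-.
  by apply: eq_bigr.
apply/existsP; apply: contraR vn0 => /existsPn H; apply/eqP/rowP => j.
by rewrite mxE; move: (H j); rewrite negbK => /eqP.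
Qed.

Lemma qf_eig k (M : 'M[R]_k) x f : (forall j, rowQ M f j = x * f j) ->
  qf M f = x * nrm f.
Proof.
move=> H; rewrite qf_row /nrm mulr_sumr; apply: eq_bigr => j _.
by rewrite H; ring.
Qed.

Lemma nrm_ge0 k (f : 'I_k -> R) : 0 <= nrm f.
Proof. by apply: sumr_ge0 => i _; exact: sqr_ge0. Qed.

Lemma nrm_gt0 k (f : 'I_k -> R) j : f j != 0 -> 0 < nrm f.
Proof.
move=> fj; rewrite /nrm (bigD1 j) //=.
have h1 : 0 < f j ^+ 2 by rewrite lt_def sqrf_eq0 fj sqr_ge0.
have h2 : 0 <= \sum_(i | i != j) f i ^+ 2 by apply: sumr_ge0 => i _; exact: sqr_ge0.
lra.
Qed.

Lemma psd_largest k (M : 'M[R]_k) X y :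
  (forall g, qf M g <= X * nrm g) -> eigenvalue M y -> y <= X.
Proof.
move=> psd /eig_fun [f [fe [j fj]]].
have := psd f; rewrite (qf_eig fe) => H.
by rewrite -(ler_pM2r (nrm_gt0 fj)).
Qed.

Lemma qf_expand k (M : 'M[R]_k) f g e :
  qf M (fun i => f i + e * g i) =
  qf M f + e * (\sum_i \sum_j f i * M i j * g j + \sum_i \sum_j g i * M i j * f j)
  + e ^+ 2 * qf M g.
Proof.
rewrite /qf mulrDr !mulr_sumr -!big_split /=; apply: eq_bigr => i _.
rewrite !mulr_sumr -!big_split /=; apply: eq_bigr => j _; ring.
Qed.

Lemma nrm_expand k (f g : 'I_k -> R) e :
  nrm (fun i => f i + e * g i) =
  nrm f + e * (2 * \sum_i f i * g i) + e ^+ 2 * nrm g.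
Proof.
rewrite /nrm !mulr_sumr -!big_split /=; apply: eq_bigr => i _; ring.
Qed.

Lemma quad_zero (c d : R) : 0 <= d -> (forall e, 0 <= e * (2 * c) + e ^+ 2 * d) -> c = 0.
Proof.
move=> d0 H; have := H (- c / (d + 1)).
have d1 : 0 < d + 1 by lra.
have -> : - c / (d + 1) * (2 * c) + (- c / (d + 1)) ^+ 2 * d =
   - (c ^+ 2 * (d + 2)) / (d + 1) ^+ 2.
  by field; rewrite gt_eqF.
have D : 0 < (d + 1) ^+ 2 by rewrite exprn_gt0.
rewrite pmulr_lge0 ?invr_gt0 // oppr_ge0 => H2.
have c2 : 0 <= c ^+ 2 by exact: sqr_ge0.
have : c ^+ 2 <= 0 by nra.
move=> c3; apply/eqP; by rewrite -sqrf_eq0 eq_le c3 c2.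
Qed.

Lemma psd_kernel k (M : 'M[R]_k) X f :
  (forall i j, M i j = M j i) ->
  (forall g, qf M g <= X * nrm g) -> qf M f = X * nrm f ->
  forall j, rowQ M f j = X * f j.
Proof.
move=> Msym psd eqf j.
pose g := fun i : 'I_k => ((i == j)%:R : R).
have s1 : \sum_i \sum_j0 f i * M i j0 * g j0 = rowQ M f j.
  by apply: eq_bigr => i _; rewrite /g sum_delta.
have s2 : \sum_i \sum_j0 g i * M i j0 * f j0 = rowQ M f j.
  transitivity (\sum_i (\sum_j0 M i j0 * f j0) * (i == j)%:R).
    by apply: eq_bigr => i _; rewrite mulr_suml; apply: eq_bigr => j0 _; rewrite /g; ring.
  by rewrite sum_delta /rowQ; apply: eq_bigr => j0 _; rewrite Msym; ring.
have qg : qf M g = M j j.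
  rewrite /qf /g; under eq_bigr do rewrite sum_delta mulrC.
  exact: sum_delta.
have ng : nrm g = 1.
  by rewrite /nrm /g (eq_bigr (fun i => 1 * (i == j)%:R)) ?sum_delta // => i _; case: (i == j); rewrite /= ?expr1n ?expr0n ?mul1r.
have fg : \sum_i f i * g i = f j by rewrite /g sum_delta.
set c := X * f j - rowQ M f j.
set d := X - M j j.
have d0 : 0 <= d.
  by have := psd g; rewrite qg ng mulr1 subr_ge0.
have key e : 0 <= e * (2 * c) + e ^+ 2 * d.
  have := psd (fun i => f i + e * g i).
  rewrite qf_expand nrm_expand s1 s2 qg ng fg eqf => H.
  suff -> : e * (2 * c) + e ^+ 2 * d = X * (nrm f + e * (2 * f j) + e ^+ 2 * 1) -
    (X * nrm f + e * (rowQ M f j + rowQ M f j) + e ^+ 2 * M j j) by rewrite subr_ge0.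
  rewrite /c /d; ring.
have c0 := quad_zero d0 key.
by apply/eqP; rewrite eq_sym -subr_eq0 -/c c0.
Qed.


Section Join.
Variables (m n : nat) (B : 'M[nat]_m) (A : 'M[nat]_n).
Definition wI : 'I_(1 + (m+n)) := lshift (m+n) (ord0 : 'I_1).
Definition bI (i : 'I_m) : 'I_(1+(m+n)) := rshift 1 (lshift n i).
Definition aI (j : 'I_n) : 'I_(1+(m+n)) := rshift 1 (rshift m j).

Lemma sum3 (T : Type) (idx : T) (op : Monoid.com_law idx) (F : 'I_(1+(m+n)) -> T) :
  \big[op/idx]_k F k = op (op (F wI) (\big[op/idx]_i F (bI i))) (\big[op/idx]_j F (aI j)).
Proof.
rewrite big_split_ord big_ord1 big_split_ord /=.
by rewrite Monoid.mulmA.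
Qed.

Let J := join1 (dunion B A).
Lemma Jww : J wI wI = 0%N. Proof. by rewrite /J /join1 /wI block_mxEul mxE. Qed.
Lemma Jwb i : J wI (bI i) = 1%N. Proof. by rewrite /J /join1 /wI /bI block_mxEur mxE. Qed.
Lemma Jwa j : J wI (aI j) = 1%N. Proof. by rewrite /J /join1 /wI /aI block_mxEur mxE. Qed.
Lemma Jbw i : J (bI i) wI = 1%N. Proof. by rewrite /J /join1 /wI /bI block_mxEdl mxE. Qed.
Lemma Jaw j : J (aI j) wI = 1%N. Proof. by rewrite /J /join1 /wI /aI block_mxEdl mxE. Qed.
Lemma Jbb i i' : J (bI i) (bI i') = B i i'.
Proof. by rewrite /J /join1 /bI block_mxEdr /dunion block_mxEul. Qed.
Lemma Jba i j : J (bI i) (aI j) = 0%N.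
Proof. by rewrite /J /join1 /bI /aI block_mxEdr /dunion block_mxEur mxE. Qed.
Lemma Jab j i : J (aI j) (bI i) = 0%N.
Proof. by rewrite /J /join1 /bI /aI block_mxEdr /dunion block_mxEdl mxE. Qed.
Lemma Jaa j j' : J (aI j) (aI j') = A j j'.
Proof. by rewrite /J /join1 /aI block_mxEdr /dunion block_mxEdr. Qed.


Lemma bw i : (bI i == wI) = false. Proof. by rewrite /bI /wI; apply/negbTE/eqP=> /(congr1 val). Qed.
Lemma aw j : (aI j == wI) = false. Proof. by rewrite /aI /wI; apply/negbTE/eqP=> /(congr1 val). Qed.
Lemma wb i : (wI == bI i) = false. Proof. by rewrite eq_sym bw. Qed.
Lemma wa j : (wI == aI j) = false. Proof. by rewrite eq_sym aw. Qed.
Lemma ba i j : (bI i == aI j) = false.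
Proof.
rewrite /bI /aI; apply/negbTE/eqP=> /(congr1 val) /= /eqP.
by rewrite eqn_add2l => /eqP h; move: (ltn_ord i); rewrite h ltnNge leq_addr.
Qed.
Lemma ab j i : (aI j == bI i) = false. Proof. by rewrite eq_sym ba. Qed.
Lemma bb i i' : (bI i == bI i') = (i == i').
Proof.
apply/eqP/eqP => [/(congr1 val) /= /eqP|->//]; rewrite eqn_add2l => /eqP h.
exact: val_inj.
Qed.
Lemma aa j j' : (aI j == aI j') = (j == j').
Proof.
apply/eqP/eqP => [/(congr1 val) /= /eqP|->//]; rewrite eqn_add2l eqn_add2l => /eqP h.
exact: val_inj.
Qed.

Lemma degw : degn J wI = (m + n)%N.
Proof.
rewrite /degn sum3 Jww /= (eq_bigr (fun=> 1%N) (fun i _ => Jwb i)).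
by rewrite (eq_bigr (fun=> 1%N) (fun j _ => Jwa j)) !sum_nat_const !card_ord !muln1.
Qed.
Lemma degb i : degn J (bI i) = (1 + degn B i)%N.
Proof.
rewrite /degn sum3 Jbw /= (eq_bigr (fun i' => B i i') (fun i' _ => Jbb i i')).
have -> : \sum_(j < n) J (bI i) (aI j) = 0%N by rewrite big1 // => j _; exact: Jba.
by rewrite addn0.
Qed.
Lemma dega j : degn J (aI j) = (1 + degn A j)%N.
Proof.
rewrite /degn sum3 Jaw /= (eq_bigr (fun j' => A j j') (fun j' _ => Jaa j j')).
have -> : \sum_(i < m) J (aI j) (bI i) = 0%N by rewrite big1 // => i _; exact: Jab.
by rewrite addn0.
Qed.

Let Qm := signless_laplacian R J.
Lemma QE k k' : Qm k k' = (J k k')%:R + (k == k')%:R * (degn J k)%:R.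
Proof. by rewrite /Qm mxE. Qed.

Lemma rowQ_w F : rowQ Qm F wI =
  F wI * (m + n)%:R + \sum_i F (bI i) + \sum_j F (aI j).
Proof.
rewrite /rowQ sum3 /= QE Jww degw eqxx mul1r add0r.
congr (_ + _ + _); apply: eq_bigr => i _.
  by rewrite QE Jbw bw mul0r addr0 mulr1.
by rewrite QE Jaw aw mul0r addr0 mulr1.
Qed.

Lemma rowQ_b F i0 : rowQ Qm F (bI i0) = F wI + rowI B (fun i => F (bI i)) i0.
Proof.
rewrite /rowQ sum3 /= QE Jwb wb mul0r addr0 mulr1 -addrA; congr (_ + _).
have -> : \sum_j F (aI j) * Qm (aI j) (bI i0) = 0.
  by rewrite big1 // => j _; rewrite QE Jab ab mul0r addr0 mulr0.
rewrite addr0.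
rewrite /rowI (bigD1 i0) //= QE Jbb eqxx mul1r degb.
rewrite [in RHS](bigD1 i0) //= mulrDr (mulrC _ (F (bI i0))) -!addrA; congr (_ + _).
rewrite addrC; congr (_ + _); apply: eq_bigr => i ne.
by rewrite QE Jbb bb (negbTE ne) mul0r addr0.
Qed.

Lemma rowQ_a F j0 : rowQ Qm F (aI j0) = F wI + rowI A (fun j => F (aI j)) j0.
Proof.
rewrite /rowQ sum3 /= QE Jwa wa mul0r addr0 mulr1 -addrA; congr (_ + _).
have -> : \sum_i F (bI i) * Qm (bI i) (aI j0) = 0.
  by rewrite big1 // => i _; rewrite QE Jba ba mul0r addr0 mulr0.
rewrite add0r.
rewrite /rowI (bigD1 j0) //= QE Jaa eqxx mul1r dega.
rewrite [in RHS](bigD1 j0) //= mulrDr (mulrC _ (F (aI j0))) -!addrA; congr (_ + _).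
rewrite addrC; congr (_ + _); apply: eq_bigr => j ne.
by rewrite QE Jaa aa (negbTE ne) mul0r addr0.
Qed.

Lemma idx_cases k : k = wI \/ (exists i, k = bI i) \/ (exists j, k = aI j).
Proof.
rewrite -(splitK k); case: (split k) => [k0|k1] /=.
  by left; rewrite /wI (ord1 k0).
rewrite -(splitK k1); case: (split k1) => [i|j] /=; right; [left|right].
  by exists i.
by exists j.
Qed.

Definition mkv (u : R) (a : 'I_m -> R) (b : 'I_n -> R) (k : 'I_(1+(m+n))) : R :=
  match split k with inl _ => u | inr k1 => match split k1 with inl i => a i | inr j => b j end end.
Lemma mkv_w u a b : mkv u a b wI = u.
Proof. by rewrite /mkv /wI -[lshift _ _]/(unsplit (inl _ _)) unsplitK. Qed.
Lemma mkv_b u a b i : mkv u a b (bI i) = a i.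
Proof.
rewrite /mkv /bI -[rshift _ (lshift _ _)]/(unsplit (inr _ (lshift _ i))) unsplitK.
by rewrite -[lshift _ _]/(unsplit (inl _ _)) unsplitK.
Qed.
Lemma mkv_a u a b j : mkv u a b (aI j) = b j.
Proof.
rewrite /mkv /aI -[rshift _ (rshift _ _)]/(unsplit (inr _ (rshift _ j))) unsplitK.
by rewrite -[rshift m j]/(unsplit (inr _ _)) unsplitK.
Qed.

Hypothesis Bsym : forall i j, B i j = B j i.
Hypothesis Asym : forall i j, A i j = A j i.
Lemma Jsym k k' : J k k' = J k' k.
Proof.
case: (idx_cases k) => [->|[[i ->]|[j ->]]];
case: (idx_cases k') => [->|[[i' ->]|[j' ->]]];
rewrite ?Jww ?Jwb ?Jwa ?Jbw ?Jaw ?Jbb ?Jba ?Jab ?Jaa //.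
Qed.
Lemma Qsym k k' : Qm k k' = Qm k' k.
Proof.
rewrite !QE Jsym; case: (eqVneq k k') => [->//|ne].
by rewrite !mul0r.
Qed.
End Join.
End G.

Section Compare.
Variable R : rcfType.

Lemma rowI_scale k (G : 'M[nat]_k) (f : 'I_k -> R) c j :
  rowI G (fun i => c * f i) j = c * rowI G f j.
Proof.
rewrite /rowI mulrDr mulr_sumr; congr (_ + _); last by ring.
by apply: eq_bigr => i _; ring.
Qed.

Lemma rowI_sym k (G : 'M[nat]_k) (f g : 'I_k -> R) :
  (forall i j, G i j = G j i) ->
  \sum_i f i * rowI G g i = \sum_i g i * rowI G f i.
Proof.
move=> Gs; rewrite /rowI.
under eq_bigr do rewrite mulrDr mulr_sumr.
under [in RHS]eq_bigr do rewrite mulrDr mulr_sumr.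
rewrite !big_split /=; congr (_ + _).
  rewrite exchange_big; apply: eq_bigr => i _; apply: eq_bigr => j _.
  by rewrite Gs; ring.
by apply: eq_bigr => i _; ring.
Qed.

Lemma eq_rowI k (G : 'M[nat]_k) (f g : 'I_k -> R) j :
  (forall i, f i = g i) -> rowI G f j = rowI G g j.
Proof.
move=> H; rewrite /rowI H; congr (_ + _); apply: eq_bigr => i _; by rewrite H.
Qed.

Lemma SL_ge0 k (G : 'M[nat]_k) i j : 0 <= signless_laplacian R G i j.
Proof. by rewrite mxE addr_ge0 ?mulr_ge0 ?ler0n. Qed.

Lemma sqr_norm (a : R) : `|a| ^+ 2 = a ^+ 2.
Proof. by rewrite -normrX ger0_norm ?sqr_ge0. Qed.


Lemma compare m m' n (B : 'M[nat]_m) (B' : 'M[nat]_m') (A : 'M[nat]_n) (x y : R)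
  (al : 'I_m -> R) (al' : 'I_m' -> R) :
  m = m' -> (forall i j, B i j = B j i) -> (forall i j, A i j = A j i) ->
  eigenvalue (signless_laplacian R (join1 (dunion B A))) x ->
  (forall g, qf (signless_laplacian R (join1 (dunion B A))) g <= x * nrm g) ->
  (forall i, x * al i = 1 + rowI B al i) ->
  (forall i, x * al' i = 1 + rowI B' al' i) ->
  \sum_i al i < \sum_i al' i ->
  (forall g, qf (signless_laplacian R (join1 (dunion B' A))) g <= y * nrm g) ->
  x < y.
Proof.
move=> emm Bs As eig psd hal hal' hsum psd'; subst m'.
set Q := signless_laplacian R (join1 (dunion B A)) in eig psd.
have [f [fe [j0 fj0]]] := eig_fun eig.
pose u k := `|f k|.
have nu : nrm u = nrm f by apply: eq_bigr => i _; rewrite sqr_norm.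
have qfu : x * nrm u <= qf Q u.
  rewrite nu -(qf_eig fe) /qf; apply: ler_sum => i _; apply: ler_sum => j _.
  apply: le_trans (ler_norm _) _.
  by rewrite !normrM (ger0_norm (SL_ge0 _ _ _)).
have qu : qf Q u = x * nrm u by apply/eqP; rewrite eq_le qfu psd.
have ue := psd_kernel (@Qsym R _ _ B A Bs As) psd qu.
have uw : f (wI m n) != 0.
  apply/negP => /eqP fw0.
  have h := ue (wI m n); rewrite rowQ_w in h.
  have uw0 : u (wI m n) = 0 by rewrite /u fw0 normr0.
  rewrite uw0 mul0r mulr0 add0r in h.
  have s1 : 0 <= \sum_i u (bI n i) by apply: sumr_ge0 => i _; exact: normr_ge0.
  have s2 : 0 <= \sum_j u (aI m j) by apply: sumr_ge0 => i _; exact: normr_ge0.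
  have e1 : \sum_i u (bI n i) = 0 by lra.
  have e2 : \sum_j u (aI m j) = 0 by lra.
  case: (idx_cases j0) => [E|[[i E]|[j E]]]; move: fj0; rewrite E.
  - by rewrite fw0 eqxx.
  - have := @psumr_eq0P _ _ xpredT (fun i => u (bI n i)) (fun i _ => normr_ge0 _) e1 i isT.
    by rewrite /u => /eqP; rewrite normr_eq0 => ->.
  - have := @psumr_eq0P _ _ xpredT (fun j => u (aI m j)) (fun i _ => normr_ge0 _) e2 j isT.
    by rewrite /u => /eqP; rewrite normr_eq0 => ->.
set u0 := f (wI m n).
pose a i := f (bI n i).
pose b j := f (aI m j).
have hw : x * u0 = u0 * (m + n)%:R + \sum_i a i + \sum_j b j by rewrite -fe rowQ_w.
have hb i : x * a i = u0 + rowI B a i by rewrite -fe rowQ_b.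
have ha j : x * b j = u0 + rowI A b j by rewrite -fe rowQ_a.
have sa : \sum_i a i = u0 * \sum_i al i.
  have e1 : \sum_i a i = \sum_i a i * (x * al i - rowI B al i).
    by apply: eq_bigr => i _; rewrite hal addrK mulr1.
  rewrite e1 (_ : \sum_i a i * (x * al i - rowI B al i) =
     \sum_i (x * a i * al i) - \sum_i a i * rowI B al i); last first.
    by rewrite -sumrB; apply: eq_bigr => i _; ring.
  have e2 : \sum_i a i * rowI B al i = \sum_i al i * (x * a i - u0).
    rewrite (rowI_sym _ _ Bs); apply: eq_bigr => i _.
    by rewrite hb [u0 + _]addrC addrK.
  rewrite e2.
  by rewrite -sumrB mulr_sumr; apply: eq_bigr => i _; ring.
pose a' i := u0 * al' i.
pose z := mkv u0 a' b.
set Q' := signless_laplacian R (join1 (dunion B' A)) in psd'.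
have rw : rowQ Q' z (wI m n) = u0 * (m + n)%:R + u0 * \sum_i al' i + \sum_j b j.
  rewrite rowQ_w /z mkv_w mulr_sumr; congr (_ + _ + _); apply: eq_bigr => i _.
    by rewrite mkv_b.
  by rewrite mkv_a.
have rb i : rowQ Q' z (bI n i) = x * u0 * al' i.
  rewrite rowQ_b /z mkv_w (eq_rowI _ _ (fun i => mkv_b u0 a' b i)) rowI_scale.
  rewrite (_ : rowI B' al' i = x * al' i - 1); last by rewrite hal' [1 + _]addrC addrK.
  by rewrite mulrBr mulr1 addrCA subrr addr0 mulrA [u0 * x]mulrC.
have ra j : rowQ Q' z (aI m j) = x * b j.
  by rewrite rowQ_a /z mkv_w (eq_rowI _ _ (fun i => mkv_a u0 a' b i)) ha.
have qz : qf Q' z = u0 ^+ 2 * (m + n)%:R + u0 ^+ 2 * \sum_i al' i + u0 * \sum_j b j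
   + x * u0 ^+ 2 * \sum_i al' i ^+ 2 + x * \sum_j b j ^+ 2.
  have s1 : \sum_i rowQ Q' z (bI n i) * z (bI n i) = x * u0 ^+ 2 * \sum_i al' i ^+ 2.
    by rewrite mulr_sumr; apply: eq_bigr => i _; rewrite rb /z mkv_b /a'; ring.
  have s2 : \sum_j rowQ Q' z (aI m j) * z (aI m j) = x * \sum_j b j ^+ 2.
    by rewrite mulr_sumr; apply: eq_bigr => j _; rewrite ra /z mkv_a; ring.
  rewrite qf_row sum3 /= rw s1 s2 /z mkv_w; ring.
have nz : nrm z = u0 ^+ 2 + u0 ^+ 2 * \sum_i al' i ^+ 2 + \sum_j b j ^+ 2.
  rewrite /nrm sum3 /= /z mkv_w mulr_sumr; congr (_ + _ + _); apply: eq_bigr => i _.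
    by rewrite mkv_b /a'; ring.
  by rewrite mkv_a.
have u0gt : 0 < u0 ^+ 2 by rewrite lt_def sqrf_eq0 uw sqr_ge0.
have nzgt : 0 < nrm z.
  rewrite nz; have h1 : 0 <= \sum_i al' i ^+ 2 by apply: sumr_ge0 => i _; exact: sqr_ge0.
  have h2 : 0 <= \sum_j b j ^+ 2 by apply: sumr_ge0 => i _; exact: sqr_ge0.
  have h3 : 0 <= u0 ^+ 2 * \sum_i al' i ^+ 2 by rewrite mulr_ge0 // ltW.
  lra.
have key : qf Q' z = x * nrm z + u0 ^+ 2 * (\sum_i al' i - \sum_i al i).
  rewrite qz nz; apply/eqP; rewrite -subr_eq0; apply/eqP.
  have hw' : u0 * (x * u0) = u0 * (u0 * (m + n)%:R + u0 * \sum_i al i + \sum_j b j).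
    by rewrite hw sa.
  move: hw'; set N := (m + n)%:R; set S1 := \sum_i al i; set S2 := \sum_i al' i.
  set S3 := \sum_j b j; set S4 := \sum_i al' i ^+ 2; set S5 := \sum_j b j ^+ 2.
  move=> hw'.
  have -> : u0 ^+ 2 * N + u0 ^+ 2 * S2 + u0 * S3 + x * u0 ^+ 2 * S4 + x * S5 -
    (x * (u0 ^+ 2 + u0 ^+ 2 * S4 + S5) + u0 ^+ 2 * (S2 - S1)) =
    u0 * (u0 * N + u0 * S1 + S3) - u0 * (x * u0) by ring.
  by rewrite hw' subrr.
have := psd' z; rewrite key => H.
have : x * nrm z < y * nrm z.
  have : 0 < u0 ^+ 2 * (\sum_i al' i - \sum_i al i) by rewrite mulr_gt0 // subr_gt0.
  lra.
by rewrite ltr_pM2r.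
Qed.
End Compare.

Section Bound.
Variable R : rcfType.

Lemma sum_rowI_one m (B : 'M[nat]_m) :
  \sum_i rowI B (fun _ => (1 : R)) i = (m + 2 * \sum_i \sum_j B i j)%N%:R.
Proof.
rewrite /rowI big_split /= natrD natrM.
have e1 : \sum_(i < m) \sum_i0 (1 : R) * (B i0 i)%:R = (\sum_i \sum_j B i j)%N%:R.
  rewrite exchange_big natr_sum; apply: eq_bigr => i _; rewrite natr_sum.
  by apply: eq_bigr => j _; rewrite mul1r.
have e2 : \sum_(i < m) (1 + degn B i)%:R * (1 : R) = (m + \sum_i \sum_j B i j)%N%:R.
  rewrite natrD natr_sum -[m in m%:R]card_ord -sumr_const -big_split /=.
  by apply: eq_bigr => i _; rewrite mulr1 natrD natr_sum /degn.
rewrite e1 e2 natrD; ring.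
Qed.

Lemma x_gt5 m n (B : 'M[nat]_m) (A : 'M[nat]_n) (x : R) :
  (4 <= m)%N -> (1 <= \sum_i \sum_j B i j)%N ->
  (forall g, qf (signless_laplacian R (join1 (dunion B A))) g <= x * nrm g) ->
  5 < x.
Proof.
move=> m4 S1 psd.
pose z := mkv (3 : R) (fun _ : 'I_m => 1) (fun _ : 'I_n => 0).
have := psd z.
set Q := signless_laplacian R (join1 (dunion B A)).
have rw : rowQ Q z (wI m n) = 3 * (m + n)%:R + m%:R.
  rewrite rowQ_w /z mkv_w (eq_bigr (fun _ => 1)) ?sumr_const ?card_ord; last by move=> i _; rewrite mkv_b.
  rewrite big1 ?addr0; last by move=> j _; rewrite mkv_a.
  by rewrite mulrC.
have qz : qf Q z = 9 * (m + n)%:R + 3 * m%:R + 3 * m%:R + (m + 2 * \sum_i \sum_j B i j)%N%:R.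
  have sA : \sum_j rowQ Q z (aI m j) * z (aI m j) = 0.
    by apply: big1 => j _; rewrite /z mkv_a mulr0.
  have sB : \sum_i rowQ Q z (bI n i) * z (bI n i) = \sum_i (3 + rowI B (fun _ => (1:R)) i).
    apply: eq_bigr => i _; rewrite rowQ_b /z mkv_w mkv_b mulr1.
    by rewrite (eq_rowI _ _ (fun i => mkv_b (3 : R) (fun _ : 'I_m => 1) (fun _ : 'I_n => 0) i)).
  rewrite qf_row sum3 /= rw sA sB addr0 big_split /= sum_rowI_one sumr_const card_ord /z mkv_w.
  rewrite -[3 *+ m]mulr_natr; ring.
have nz : nrm z = 9 + m%:R.
  rewrite /nrm sum3 /= /z mkv_w (eq_bigr (fun _ => 1)) ?sumr_const ?card_ord; last by move=> i _; rewrite mkv_b expr1n.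
  by rewrite big1 ?addr0 => [|j _]; [ring|rewrite mkv_a expr0n].
rewrite qz nz !natrD ?natrM => H.
have hm : (4 : R) <= m%:R by rewrite (ler_nat R 4 m).
have hS : (1 : R) <= (\sum_i \sum_j B i j)%N%:R by rewrite (ler_nat R 1).
have hn : (0 : R) <= n%:R by rewrite ler0n.
nra.
Qed.
End Bound.


Section Path.
Variable R : rcfType.

Lemma sum_ind (l k : nat) (g : nat -> R) :
  \sum_(j < l) g j * ((j : nat) == k)%:R = if (k < l)%N then g k else 0.
Proof.
case: ltnP => hk.
  rewrite (bigD1 (Ordinal hk)) //= eqxx mulr1 big1 ?addr0 // => j ne.
  suff -> : ((j : nat) == k) = false by rewrite mulr0.
  by apply/negbTE; apply: contra ne => /eqP e; apply/eqP/val_inj.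
apply: big1 => j _; suff -> : ((j : nat) == k) = false by rewrite mulr0.
by apply/negbTE; rewrite neq_ltn (leq_trans (ltn_ord j) hk).
Qed.

Lemma path_sym l i j : path_adj l i j = path_adj l j i.
Proof. by rewrite !mxE orbC. Qed.

Lemma path_col l (g : nat -> R) (i : 'I_l) :
  \sum_(j < l) g j * (path_adj l j i)%:R =
  (if (0 < i)%N then g i.-1 else 0) + (if (i.+1 < l)%N then g i.+1 else 0).
Proof.
have E j : (path_adj l j i)%:R = ((j.+1 == i) : nat)%:R + ((i.+1 == j) : nat)%:R :> R.
  rewrite mxE -natrD; congr (_%:R).
  by case: eqP => [<-|]; case: eqP => // e; move: e; rewrite -addn2 -{2}(addn0 j) => /eqP; rewrite eqn_add2l.
under eq_bigr do rewrite E mulrDr.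
rewrite big_split /=; congr (_ + _).
  case: (posnP i) => [i0|ip].
    by rewrite i0 /=; apply: big1 => j _; rewrite mulr0.
  rewrite -(ltn_predK ip).
  under eq_bigr do rewrite eqSS.
  by rewrite sum_ind /= (leq_ltn_trans (leq_pred _) (ltn_ord i)).
under eq_bigr do rewrite eq_sym.
by rewrite sum_ind.
Qed.

Lemma path_rowI l (g : nat -> R) (i : 'I_l) :
  rowI (path_adj l) (fun j => g j) i =
  (if (0 < i)%N then g i.-1 else 0) + (if (i.+1 < l)%N then g i.+1 else 0) +
  (1 + (0 < i)%N%:R + (i.+1 < l)%N%:R) * g i.
Proof.
rewrite /rowI path_col; congr (_ + _ * _).
rewrite natrD -addrA; congr (_ + _).
have -> : (degn (path_adj l) i)%:R = \sum_(j < l) (fun _ => (1 : R)) j * (path_adj l j i)%:R.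
  rewrite /degn natr_sum; apply: eq_bigr => j _; by rewrite mul1r path_sym.
by rewrite (path_col (fun _ => 1)); case: (0 < i)%N; case: (i.+1 < l)%N.
Qed.

Definition cc (r : R) := r / (r - 1) ^+ 2.
Definition KK (r : R) l := 2 / ((1 + r) * (1 + r ^+ l)).
Definition pv (r : R) l k := cc r - cc r * KK r l * (r ^+ k.+1 + r ^+ (l - k)).

Lemma path_eq r l i : 1 < r -> (2 <= l)%N -> (i < l)%N ->
  (3 + r + r^-1) * pv r l i =
  1 + ((if (0 < i)%N then pv r l i.-1 else 0) + (if (i.+1 < l)%N then pv r l i.+1 else 0) +
  (1 + (0 < i)%N%:R + (i.+1 < l)%N%:R) * pv r l i).
Proof.
move=> r1 l2 il.
have rp : 0 < r by rewrite (lt_trans ltr01 r1).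
have r0 : r != 0 by rewrite gt_eqF.
have rm1 : r - 1 != 0 by rewrite subr_eq0 gt_eqF.
have rp1 : 1 + r != 0 by rewrite gt_eqF //; lra.
have rl k : 1 + r ^+ k != 0 by rewrite gt_eqF //; have := exprn_gt0 k rp; lra.
have El : l = (i + (l - i.+1).+1)%N by lia.
move: (l - i.+1)%N El => p El; subst l.
rewrite /pv /KK.
case: i il l2 => [|j] il l2; case: p il l2 => [|q] il l2 //=.
- have -> : (0 + q.+2 - 0 = q.+2)%N by lia.
  have -> : (0 + q.+2 - 1 = q.+1)%N by lia.
  rewrite !add0n /=.
  rewrite /cc !exprS; have h := rl q.+2; rewrite !exprS in h.
  by field; rewrite h rp1 rm1 r0.
- have -> : (j.+1 + 1 = j.+2)%N by lia.
  have -> : (j.+2 - j.+1 = 1)%N by lia.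
  have -> : (j.+2 - j = 2)%N by lia.
  rewrite ltnn /=.
  rewrite /cc !exprS; have h := rl j.+2; rewrite !exprS in h.
  by field; rewrite h rp1 rm1 r0.
- have -> : (j.+1 + q.+2 = (j + q).+3)%N by lia.
  have -> : ((j + q).+3 - j.+1 = q.+2)%N by lia.
  have -> : ((j + q).+3 - j = q.+3)%N by lia.
  have -> : ((j + q).+3 - j.+2 = q.+1)%N by lia.
  have -> : (j.+2 < (j + q).+3)%N by lia.
  rewrite /= /cc !exprS exprD; have h := rl (j + q).+3; rewrite !exprS exprD in h.
  by field; rewrite h rp1 rm1 r0.
Qed.


Lemma path_sol r l : 1 < r -> (2 <= l)%N -> forall i : 'I_l,
  (3 + r + r^-1) * pv r l i = 1 + rowI (path_adj l) (fun j => pv r l j) i.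
Proof. by move=> r1 l2 i; rewrite path_rowI; apply: path_eq. Qed.

Lemma geo (r : R) m : (r - 1) * \sum_(i < m) r ^+ i.+1 = r ^+ m.+1 - r.
Proof.
elim: m => [|m IH]; first by rewrite big_ord0 mulr0 expr1 subrr.
by rewrite big_ord_recr /= mulrDr IH !exprS; ring.
Qed.

Lemma geo_rev (r : R) m : \sum_(i < m) r ^+ (m - i) = \sum_(i < m) r ^+ i.+1.
Proof.
elim: m => [|m IH]; first by rewrite !big_ord0.
rewrite big_ord_recl big_ord_recr /= subn0.
rewrite (eq_bigr (fun i : 'I_m => r ^+ (m - i))); first by rewrite IH addrC.
move=> i _.
by rewrite /bump /= add1n subSS.
Qed.

Lemma Spv r m : 1 < r -> \sum_(i < m) pv r m i =
  m%:R * cc r - cc r * KK r m * (2 * ((r ^+ m.+1 - r) / (r - 1))).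
Proof.
move=> r1; have rm1 : r - 1 != 0 by rewrite subr_eq0 gt_eqF.
rewrite /pv sumrB sumr_const card_ord -mulr_natl -mulr_sumr big_split /= geo_rev.
rewrite -(geo r m); congr (_ - _ * _); by field; rewrite ?rm1.
Qed.

Lemma sum_cmp r l l' : 1 < r -> (l' < l)%N ->
  \sum_(i < l) pv r l i < (l - l')%N%:R * cc r + \sum_(i < l') pv r l' i.
Proof.
move=> r1 ll; rewrite !Spv // natrB ?(ltnW ll) //.
have rp : 0 < r by rewrite (lt_trans ltr01 r1).
have ab : r ^+ l' < r ^+ l by rewrite ltr_eXn2l.
have a0 : 0 < r ^+ l' by rewrite exprn_gt0.
rewrite /cc /KK (exprS r l) (exprS r l'); move: ab a0; set a := r ^+ l'; set b := r ^+ l => ab a0.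
rewrite -subr_gt0.
have -> : (l%:R - l'%:R) * (r / (r - 1) ^+ 2) + (l'%:R * (r / (r - 1) ^+ 2) -
    r / (r - 1) ^+ 2 * (2 / ((1 + r) * (1 + a))) * (2 * ((r * a - r) / (r - 1)))) -
    (l%:R * (r / (r - 1) ^+ 2) -
     r / (r - 1) ^+ 2 * (2 / ((1 + r) * (1 + b))) * (2 * ((r * b - r) / (r - 1)))) =
   8 * r ^+ 2 * (b - a) / ((r - 1) ^+ 3 * (1 + r) * (1 + a) * (1 + b)).
  by field; rewrite ?gt_eqF //; lra.
have r1' : 0 < r - 1 by rewrite subr_gt0.
by apply: divr_gt0; [rewrite !mulr_gt0 ?exprn_gt0 // subr_gt0 | rewrite !mulr_gt0 ?exprn_gt0 //; lra].
Qed.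

Lemma sum_eq1 s (k : 'I_s) : (\sum_(j < s) ((j == k) : nat))%N = 1%N.
Proof.
rewrite (bigD1 k) //= eqxx big1 ?addn0 // => j ne.
by rewrite (negbTE ne).
Qed.

Lemma cyc_row s (i : 'I_s) : degn (cycle_adj s) i = 2%N.
Proof.
rewrite /degn.
rewrite (eq_bigr (fun j => ((j == ordS i) : nat) + ((ordS j == i) : nat))%N); last first.
  by move=> j _; rewrite mxE -!val_eqE /= (eq_sym (nat_of_ord i)).
rewrite big_split /= sum_eq1.
rewrite (eq_bigr (fun j => ((j == ord_pred i) : nat))); last first.
  move=> j _; congr (nat_of_bool _); apply/eqP/eqP => [<-|->]; by rewrite ?ordSK ?ord_predK.
by rewrite sum_eq1.
Qed.

Lemma cyc_col s (i : 'I_s) : (\sum_(j < s) cycle_adj s j i)%N = 2%N.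
Proof.
rewrite (eq_bigr (fun j => ((ordS j == i) : nat) + ((j == ordS i) : nat))%N); last first.
  by move=> j _; rewrite mxE -!val_eqE /= (eq_sym (nat_of_ord i)).
rewrite big_split /= sum_eq1.
rewrite (eq_bigr (fun j => ((j == ord_pred i) : nat))); last first.
  move=> j _; congr (nat_of_bool _); apply/eqP/eqP => [<-|->]; by rewrite ?ordSK ?ord_predK.
by rewrite sum_eq1.
Qed.

Lemma cyc_rowI s (c : R) (i : 'I_s) : rowI (cycle_adj s) (fun _ => c) i = 5 * c.
Proof.
rewrite /rowI -mulr_sumr -natr_sum cyc_col cyc_row; ring.
Qed.

Lemma cyc_sym s i j : cycle_adj s i j = cycle_adj s j i.
Proof. by rewrite !mxE addnC. Qed.

Lemma dunion_sym s p (G : 'M[nat]_s) (H : 'M[nat]_p) :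
  (forall i j, G i j = G j i) -> (forall i j, H i j = H j i) ->
  forall k k', dunion G H k k' = dunion G H k' k.
Proof.
move=> Gs Hs k k'; rewrite -(splitK k) -(splitK k').
case: (split k) => a; case: (split k') => b /=;
rewrite /dunion ?block_mxEul ?block_mxEur ?block_mxEdl ?block_mxEdr ?mxE //.
Qed.

Lemma rowI_dl s p (G : 'M[nat]_s) (H : 'M[nat]_p) (f : 'I_(s + p) -> R) i :
  rowI (dunion G H) f (lshift p i) = rowI G (fun i' => f (lshift p i')) i.
Proof.
rewrite /rowI big_split_ord /=.
have -> : \sum_(i0 < p) f (rshift s i0) * (dunion G H (rshift s i0) (lshift p i))%:R = 0.
  by apply: big1 => j _; rewrite /dunion block_mxEdl mxE mulr0.
rewrite addr0; congr (_ + (1 + _)%:R * _).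
  by apply: eq_bigr => j _; rewrite /dunion block_mxEul.
rewrite /degn big_split_ord /=.
have -> : (\sum_(j < p) dunion G H (lshift p i) (rshift s j))%N = 0%N.
  by apply: big1 => j _; rewrite /dunion block_mxEur mxE.
by rewrite addn0; apply: eq_bigr => j _; rewrite /dunion block_mxEul.
Qed.

Lemma rowI_dr s p (G : 'M[nat]_s) (H : 'M[nat]_p) (f : 'I_(s + p) -> R) i :
  rowI (dunion G H) f (rshift s i) = rowI H (fun i' => f (rshift s i')) i.
Proof.
rewrite /rowI big_split_ord /=.
have -> : \sum_(i0 < s) f (lshift p i0) * (dunion G H (lshift p i0) (rshift s i))%:R = 0.
  by apply: big1 => j _; rewrite /dunion block_mxEur mxE mulr0.
rewrite add0r; congr (_ + (1 + _)%:R * _).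
  by apply: eq_bigr => j _; rewrite /dunion block_mxEdr.
rewrite /degn big_split_ord /=.
have -> : (\sum_(j < s) dunion G H (rshift s i) (lshift p j))%N = 0%N.
  by apply: big1 => j _; rewrite /dunion block_mxEdl mxE.
by rewrite add0n; apply: eq_bigr => j _; rewrite /dunion block_mxEdr.
Qed.
End Path.


Section Main.
Variable R : rcfType.

Lemma path_S_ge1 l : (2 <= l)%N -> (1 <= \sum_i \sum_j path_adj l i j)%N.
Proof.
move=> l2.
have h0 : (0 < l)%N by lia.
have h1 : (1 < l)%N by lia.
rewrite (bigD1 (Ordinal h0)) //= (bigD1 (Ordinal h1)) //= mxE /=.
by rewrite -addnA leq_addr.
Qed.

Lemma r_exists (x : R) : 5 < x -> exists r : R, 1 < r /\ x = 3 + r + r^-1.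
Proof.
move=> x5; set t := x - 3.
have t2 : 2 < t by rewrite /t; lra.
have d0 : 0 <= t ^+ 2 - 4 by nra.
set sq := Num.sqrt (t ^+ 2 - 4).
have sq0 : 0 <= sq by exact: sqrtr_ge0.
have hsq : sq ^+ 2 = t ^+ 2 - 4 by rewrite sqr_sqrtr.
exists ((t + sq) / 2).
have r1 : 1 < (t + sq) / 2 by lra.
have r0 : (t + sq) / 2 != 0 by rewrite gt_eqF //; lra.
have rinv : (t + sq) / 2 * ((t - sq) / 2) = 1.
  rewrite (_ : _ * _ = (t ^+ 2 - sq ^+ 2) / 4); last by field.
  by rewrite hsq; field.
have -> : ((t + sq) / 2)^-1 = (t - sq) / 2.
  by apply: (mulfI r0); rewrite mulfV // rinv.
by split => //; rewrite /t; field.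
Qed.

Lemma main_gen (l n s : nat) (A1 : 'M[nat]_n) :
  (4 <= l)%N -> (forall i j, A1 i j = A1 j i) -> (2 <= s)%N -> (s <= l - 2)%N ->
  exists x y : R,
    largest_eigenvalue (signless_laplacian R (join1 (dunion (path_adj l) A1))) x /\
    largest_eigenvalue (signless_laplacian R
       (join1 (dunion (dunion (cycle_adj s) (path_adj (l - s))) A1))) y /\
    x < y.
Proof.
move=> l4 As s2 sl.
have Ps := @path_sym l.
have Bs' := dunion_sym (@cyc_sym s) (@path_sym (l - s)).
have [x [ex psd]] := top_eig (@Qsym R _ _ (path_adj l) A1 Ps As).
have [y [ey psd']] := top_eig (@Qsym R _ _ (dunion (cycle_adj s) (path_adj (l - s))) A1 Bs' As).
exists x, y; split; first by split=> // y' /(psd_largest psd).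
split; first by split=> // y' /(psd_largest psd').
have x5 : 5 < x.
  by apply: (x_gt5 (B := path_adj l) (A := A1)) => //; apply: path_S_ge1; lia.
have [r [r1 Ex]] := r_exists x5.
pose al' := fun k : 'I_(s + (l - s)) => if (k < s)%N then cc r else pv r (l - s) (k - s).
apply: (compare (m := l) (m' := s + (l - s)) (B := path_adj l)
   (B' := dunion (cycle_adj s) (path_adj (l - s))) (A := A1)
   (al := fun i => pv r l i) (al' := al')) => //.
- by lia.
- by move=> i; rewrite Ex; apply: path_sol => //; lia.
- move=> k; rewrite -(splitK k); case: (split k) => [i|j] /=.
  + rewrite rowI_dl (eq_rowI _ _ (g := fun _ => cc r)); last first.
      by move=> i'; rewrite /al' ifT //; exact: (ltn_ord i').
    rewrite cyc_rowI /al' ifT; last exact: (ltn_ord i).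
    rewrite Ex /cc.
    have rm1 : r - 1 != 0 by rewrite subr_eq0 gt_eqF.
    have r0 : r != 0 by rewrite gt_eqF //; lra.
    by field; rewrite rm1 r0.
  + rewrite rowI_dr (eq_rowI _ _ (g := fun j' => pv r (l - s) j')); last first.
      by move=> j'; rewrite /al' ifF /= ?addKn // ltnNge leq_addr.
    rewrite /al' ifF /= ?addKn; last by rewrite ltnNge /= leq_addr.
    rewrite Ex.
    by apply: path_sol => //; lia.
- rewrite big_split_ord /=.
  have e1 : \sum_(i < s) al' (lshift (l - s) i) = \sum_(i < s) cc r.
    by apply: eq_bigr => i _; rewrite /al' ifT //; exact: (ltn_ord i).
  have e2 : \sum_(j < l - s) al' (rshift s j) = \sum_(j < l - s) pv r (l - s) j.
    by apply: eq_bigr => j _; rewrite /al' ifF /= ?addKn // ltnNge leq_addr.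
  rewrite e1 e2.
  rewrite sumr_const card_ord -mulr_natr mulrC.
  have := sum_cmp r1 (_ : (l - s < l)%N); rewrite subKn; last by lia.
  by apply; lia.
Qed.
End Main.

Theorem lemma3p7 (R : rcfType) (l n : nat) (A1 : 'M[nat]_n) :
  (4 <= l)%N -> loopless_multigraph A1 ->
  ((5 <= l)%N -> forall s : nat, (3 <= s)%N -> (s <= l - 2)%N ->
     exists x y : R,
       largest_eigenvalue (signless_laplacian R (join1 (dunion (path_adj l) A1))) x /\
       largest_eigenvalue (signless_laplacian R
          (join1 (dunion (dunion (cycle_adj s) (path_adj (l - s))) A1))) y /\
       x < y) /\
  (l = 4%N ->
     exists x y : R,
       largest_eigenvalue (signless_laplacian R (join1 (dunion (path_adj l) A1))) x /\
       largest_eigenvalue (signless_laplacian R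
          (join1 (dunion (dunion (cycle_adj 2) (path_adj 2)) A1))) y /\
       x < y).
Proof.
move=> l4 [As _]; split.
  by move=> l5 s s3 sl; apply: main_gen => //; lia.
by move=> E; subst l; exact: (@main_gen R 4 n 2 A1).
Qed.
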